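(* Let $\Omega$ be a finite set, $(H_i\mid i\in\Omega)$ finite abelian groups with $h_i=|H_i|\geqslant2$ for all $i$, $\mathbf{H}=\prod_{i\in\Omega}H_i$, $\mathbf{P}=(\Omega,\preccurlyeq_{\mathbf{P}})$ a poset. Let $\alpha\in\hat{\mathbf{H}}$ with $\langle\mathrm{supp}(\alpha)\rangle_{\overline{\mathbf{P}}}=D$, and let $X=(\Omega-D)\cup\min_{\mathbf{P}}(D)$. Then $\deg(F(\alpha))=|X|=|\Omega|-|D|+|\min_{\mathbf{P}}(D)|$, and the leading coefficient of $F(\alpha)$ equals $$(-1)^{|\min_{\mathbf{P}}(D)|}\Big(\prod_{i\in X-\max_{\mathbf{P}}(X)}h_i\Big)\Big(\prod_{i\in\max_{\mathbf{P}}(X)-\min_{\mathbf{P}}(D)}(h_i-1)\Big).$$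
   Context: $\hat{\mathbf{H}}$ is the character group of $\mathbf{H}$, identified with $\prod_i\hat{H_i}$ via $\alpha(\beta)=\prod_i\alpha_{(i)}(\beta_{(i)})$; $\mathrm{supp}$ of a codeword is the set of coordinates where it is not the identity. $\max_{\mathbf{P}}(B)$, $\min_{\mathbf{P}}(B)$ are the maximal, minimal elements of $B$. For a poset $\mathbf{Q}$ on $\Omega$, $\langle B\rangle_{\mathbf{Q}}$ is the down-closure of $B$ in $\mathbf{Q}$ and $\mathrm{wt}_{\mathbf{Q}}(\beta)=|\langle\mathrm{supp}(\beta)\rangle_{\mathbf{Q}}|$. $\overline{\mathbf{P}}$ is the dual poset. With $n=|\Omega|$, $F(\alpha)=\sum_{l=0}^{n}\big(\sum_{\beta\in\mathbf{H},\ \mathrm{wt}_{\mathbf{P}}(\beta)=l}\alpha(\beta)\big)x^l$. *)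

(* Defs.v *)
From HB Require Import structures.
From mathcomp Require Import all_boot all_order all_algebra all_field.
Set Implicit Arguments. Unset Strict Implicit. Unset Printing Implicit Defensive.
Import Order.TTheory GRing.Theory Num.Theory.
Local Open Scope ring_scope.

Section Defs.
Variables (I : finType) (H : I -> finZmodType).

Definition prodH := {dffun forall i, H i}.

Definition is_char (i : I) (f : H i -> algC) : Prop :=
  f 0 = 1 /\ forall x y, f (x + y) = f x * f y.

(* alpha in \hat H identified with prod_i \hat H_i: alpha(beta) = prod_i alpha_i(beta_i) *)
Definition char_eval (alpha : forall i, H i -> algC) (beta : prodH) : algC :=
  \prod_(i : I) alpha i (beta i).

Definition char_supp (alpha : forall i, H i -> algC) : {set I} :=
  [set i | [exists x : H i, alpha i x != 1]].

Definition supp (beta : prodH) : {set I} := [set i | beta i != 0].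

End Defs.

Section Poset.
Variable (I : finType).

Definition is_poset (le : rel I) : Prop :=
  reflexive le /\ antisymmetric le /\ transitive le.

Definition dual_rel (le : rel I) : rel I := fun x y => le y x.

Definition down_closure (le : rel I) (B : {set I}) : {set I} :=
  [set j | [exists i in B, le j i]].

Definition minP (le : rel I) (B : {set I}) : {set I} :=
  [set i in B | [forall j in B, le j i ==> (j == i)]].

Definition maxP (le : rel I) (B : {set I}) : {set I} :=
  [set i in B | [forall j in B, le i j ==> (j == i)]].
End Poset.

Definition wtP (I : finType) (H : I -> finZmodType) (le : rel I) (beta : prodH H) : nat :=
  #|down_closure le (supp beta)|.

Definition Fpoly (I : finType) (H : I -> finZmodType) (le : rel I)
    (alpha : forall i, H i -> algC) : {poly algC} :=
  \sum_(l < #|I|.+1)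
     (\sum_(beta : prodH H | wtP le beta == l) char_eval alpha beta) *: 'X^l.

(* Main.v *)
Require Import Defs.
From HB Require Import structures.
From mathcomp Require Import all_boot all_order all_algebra all_field.
Import Order.TTheory GRing.Theory Num.Theory.
Local Open Scope ring_scope.
Set Implicit Arguments. Unset Strict Implicit.

Local Notation Dset le S := (down_closure (dual_rel le) S).
Local Notation Xset le S := ((~: Dset le S) :|: minP le (Dset le S)).

Lemma memD (I : finType) (le : rel I) (S : {set I}) j :
  (j \in Dset le S) = [exists s in S, le s j].
Proof. by rewrite inE. Qed.

Lemma X_down (I : finType) (le : rel I) (hle : is_poset le) (S : {set I}) i j :
  j \in Xset le S -> le i j -> i \in Xset le S.
Proof.
case: hle => rf [asy tr] jX lij.
case iD: (i \in Dset le S); last by rewrite in_setU in_setC iD.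
have jD : j \in Dset le S.
  move: iD; rewrite !inE => /existsP [s /andP [sS lsi]]; rewrite /dual_rel in lsi.
  by apply/existsP; exists s; rewrite sS /dual_rel (tr _ _ _ lsi lij).
move: jX; rewrite in_setU in_setC jD /= => jm.
have := jm; rewrite inE => /andP [_ /forallP mj].
by have := mj i; rewrite iD lij /= => /eqP ->; rewrite in_setU jm orbT.
Qed.

Lemma minD_S (I : finType) (le : rel I) (hle : is_poset le) (S : {set I}) :
  minP le (down_closure (dual_rel le) S) \subset S.
Proof.
case: hle => rf [asy tr]; apply/subsetP => i.
rewrite !inE => /andP [/existsP [s /andP [sS lsi]] /forallP mi]; rewrite /dual_rel in lsi.
have sD : s \in down_closure (dual_rel le) S.
  by rewrite inE; apply/existsP; exists s; rewrite sS /dual_rel rf.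
by have := mi s; rewrite sD lsi /= => /eqP <-.
Qed.

Lemma minD_maxX (I : finType) (le : rel I) (hle : is_poset le) (S : {set I}) :
  minP le (Dset le S) \subset maxP le (Xset le S).
Proof.
have [rf [asy tr]] := hle; apply/subsetP => i imin.
have iX : i \in Xset le S by rewrite inE imin orbT.
have := imin; rewrite inE => /andP [iD _].
rewrite inE iX /=; apply/forallP => j; apply/implyP => jX; apply/implyP => lij.
have jD : j \in Dset le S.
  move: iD; rewrite !inE => /existsP [s /andP [sS lsi]]; rewrite /dual_rel in lsi.
  by apply/existsP; exists s; rewrite sS /dual_rel (tr _ _ _ lsi lij).
move: jX; rewrite in_setU in_setC jD /= inE => /andP [_ /forallP mj].
by have := mj i; rewrite iD lij /= eq_sym.
Qed.

Lemma SX_minD (I : finType) (le : rel I) (hle : is_poset le) (S : {set I}) i :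
  i \in S -> i \in Xset le S -> i \in minP le (Dset le S).
Proof.
move=> iS; have [rf [asy tr]] := hle.
have iD : i \in Dset le S by rewrite inE; apply/existsP; exists i; rewrite iS /dual_rel rf.
by rewrite in_setU in_setC iD.
Qed.

Lemma subX (I : finType) (le : rel I) (hle : is_poset le) (S J : {set I}) :
  (forall s t, s \in S -> t \in J -> le s t -> s = t) -> J \subset Xset le S.
Proof.
move=> h; have [rf [asy tr]] := hle; apply/subsetP => j jJ.
case jD : (j \in Dset le S); last by rewrite in_setU in_setC jD.
rewrite in_setU in_setC jD /= inE jD /=.
apply/forallP => k; apply/implyP => kD; apply/implyP => lkj.
have := jD; rewrite inE => /existsP [s /andP [sS lsj]]; rewrite /dual_rel in lsj.
have esj := h s j sS jJ lsj; subst s; clear sS.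
have := kD; rewrite inE => /existsP [s /andP [sS lsk]]; rewrite /dual_rel in lsk.
have esj := h s j sS jJ (tr _ _ _ lsk lkj); subst s.
by apply/eqP; apply: asy; rewrite lkj lsk.
Qed.

Lemma above_max (I : finType) (le : rel I) (hle : is_poset le) (X : {set I}) j :
  j \in X -> exists2 u, u \in maxP le X & le j u.
Proof.
have [rf [asy tr]] := hle => jX.
pose P := [pred u | (u \in X) && le j u].
have P0 : P j by rewrite /= jX rf.
case: (@arg_maxnP _ j P (fun u => #|[set v | le v u]|) P0) => u /andP [uX lju] hu.
exists u => //; rewrite inE uX /=; apply/forallP => w; apply/implyP => wX.
apply/implyP => luw.
have sub : [set v | le v u] \subset [set v | le v w].
  by apply/subsetP => v; rewrite !inE => lvu; apply: tr lvu luw.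
have hc := hu w; rewrite /P /= wX (tr _ _ _ lju luw) in hc; have {}hc := hc isT.
have e : [set v | le v u] = [set v | le v w].
  by apply/eqP; rewrite eqEcard sub hc.
have : w \in [set v | le v w] by rewrite inE rf.
rewrite -e inE => lwu; apply/eqP; apply: asy; by rewrite lwu luw.
Qed.

Lemma char_sum (G : finZmodType) (f : G -> algC)
  (hf : f 0 = 1 /\ forall x y, f (x + y) = f x * f y) :
  \sum_x f x = if [exists x, f x != 1] then 0 else #|G|%:R.
Proof.
case: existsP => [[x0 hx0]|hn].
  have e : \sum_x f x = f x0 * \sum_x f x.
    rewrite mulr_sumr (reindex_inj (addrI x0)) /=.
    by apply: eq_bigr => x _; rewrite hf.2.
  have : (1 - f x0) * \sum_x f x = 0 by rewrite mulrBl mul1r -e subrr.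
  move/eqP; rewrite mulf_eq0 subr_eq0 eq_sym (negbTE hx0) /=.
  by move/eqP.
rewrite (eq_bigr (fun _ => 1)); last first.
  by move=> x _; apply/eqP; apply/negPn/negP => h; apply: hn; exists x.
by rewrite sumr_const.
Qed.

Lemma agree_dc (I : finType) (H : I -> finZmodType) (le : rel I) (hle : is_poset le)
  (J : {set I}) s t (b b' : prodH H) :
  t \in J -> le s t -> s != t -> (forall i, i != s -> b i = b' i) ->
  down_closure le (supp b) = J -> down_closure le (supp b') = J.
Proof.
have [rf [asy tr]] := hle => tJ lst nst hb e.
have : t \in down_closure le (supp b) by rewrite e.
rewrite inE => /existsP [u /andP [ub ltu]].
have nus : u != s.
  apply/eqP => eus; subst u; move/negP: nst; apply; apply/eqP; apply: asy.
  by rewrite lst ltu.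
have bu : b' u != 0 by rewrite -hb //; move: ub; rewrite inE.
apply/setP => j; rewrite -e !inE; apply/existsP/existsP.
  move=> [v /andP [vb ljv]].
  case: (eqVneq v s) => [evs|nvs].
    subst v; exists u; rewrite inE; move: ub; rewrite inE => -> /=.
    exact: tr (tr _ _ _ lst ltu).
  by exists v; rewrite inE hb // ljv andbT; move: vb; rewrite inE.
move=> [v /andP [vb ljv]].
case: (eqVneq v s) => [evs|nvs].
  subst v; exists u; rewrite inE bu /=.
  exact: tr (tr _ _ _ lst ltu).
by exists v; rewrite inE -hb // ljv andbT; move: vb; rewrite inE.
Qed.

Lemma sum_vanish (I : finType) (H : I -> finZmodType) (le : rel I) (hle : is_poset le)
  (alpha : forall i, H i -> algC) (halpha : forall i, is_char (alpha i))
  (J : {set I}) s t :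
  s \in char_supp alpha -> t \in J -> le s t -> s != t ->
  \sum_(b : prodH H | down_closure le (supp b) == J) char_eval alpha b = 0.
Proof.
move=> sS tJ lst nst.
move: sS; rewrite inE => /existsP [x0 hx0].
pose d : forall i, H i := dfwith (fun j => 0 : H j) x0.
pose sh (b : prodH H) : prodH H := [ffun i => b i + d i].
have dout i : i != s -> d i = 0 by move=> nis; rewrite /d dfwith_out // eq_sym.
have shinj : injective sh.
  by move=> b1 b2 /ffunP e; apply/ffunP => i; have := e i; rewrite !ffunE => /addIr.
have Psh b : (down_closure le (supp (sh b)) == J) = (down_closure le (supp b) == J).
  apply/eqP/eqP => e.
    apply: (@agree_dc _ _ _ hle J s t _ _ tJ lst nst _ e) => i nis; by rewrite ffunE dout // addr0.
  apply: (@agree_dc _ _ _ hle J s t _ _ tJ lst nst _ e) => i nis; by rewrite ffunE dout // addr0.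
have ce b : char_eval alpha (sh b) = char_eval alpha b * alpha s x0.
  rewrite /char_eval (bigD1 s) //= [X in _ = X * _](bigD1 s) //= -mulrA.
  rewrite ffunE (halpha s).2 /d dfwith_in -mulrA; congr (_ * _).
  rewrite mulrC; congr (_ * _).
  by apply: eq_bigr => i nis; rewrite ffunE dout // addr0.
set S := (X in X = 0).
have e : S = S * alpha s x0.
  rewrite /S [LHS](reindex_inj shinj) /= mulr_suml.
  by apply: eq_big => b; [exact: Psh | move=> _; exact: ce].
have : S * (1 - alpha s x0) = 0 by rewrite mulrBr mulr1 -e subrr.
by move/eqP; rewrite mulf_eq0 subr_eq0 [1 == _]eq_sym (negbTE hx0) orbF => /eqP.
Qed.

Lemma maxP_sub (I : finType) (le : rel I) (X : {set I}) i : i \in maxP le X -> i \in X.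
Proof. by rewrite inE => /andP []. Qed.

Lemma minP_sub (I : finType) (le : rel I) (X : {set I}) i : i \in minP le X -> i \in X.
Proof. by rewrite inE => /andP []. Qed.

Lemma dcX_iff (I : finType) (H : I -> finZmodType) (le : rel I) (hle : is_poset le)
  (S : {set I}) (b : prodH H) :
  (down_closure le (supp b) == Xset le S) =
  [forall i, if i \in maxP le (Xset le S) then b i != 0
             else if i \in Xset le S then true else b i == 0].
Proof.
have [rf [asy tr]] := hle.
apply/eqP/forallP => [e i|h].
  case: ifP => iM.
    have : i \in down_closure le (supp b) by rewrite e (maxP_sub iM).
    rewrite inE => /existsP [u /andP [ub liu]].
    have uX : u \in Xset le S.
      by rewrite -e inE; apply/existsP; exists u; rewrite ub rf.
    move: iM; rewrite inE => /andP [_ /forallP /(_ u)]; rewrite uX liu /= => /eqP eui.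
    by subst u; move: ub; rewrite inE.
  case: ifP => // iX; apply/negPn/negP => bi; move/negP: iX; apply.
  by rewrite -e inE; apply/existsP; exists i; rewrite inE bi rf.
apply/setP => j; rewrite inE; apply/existsP/idP.
  move=> [u /andP [ub lju]].
  have uX : u \in Xset le S.
    have := h u; case: ifP => [/maxP_sub //|_]; case: ifP => // _ /eqP bu.
    by move: ub; rewrite inE bu eqxx.
  have := X_down hle uX lju. by [].
move=> jX; have [u uM lju] := above_max hle jX.
exists u; rewrite lju andbT inE; by have := h u; rewrite uM.
Qed.


Lemma sum_prod_dffun (I : finType) (T_ : I -> finType) (f : forall i, T_ i -> algC) :
  \sum_(b : {dffun forall i, T_ i}) \prod_i f i (b i) = \prod_i \sum_(x : T_ i) f i x.
Proof.
pose P_ := fun i => [ffun x : T_ i => f i x].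
transitivity (\sum_(t : fprod T_) \prod_(i in I) P_ i (t i)).
  rewrite (reindex (@fprod_of_dffun I T_)); last first.
    by apply/onW_bij/fprod_of_dffun_bij.
  apply: eq_bigr => b _; apply: eq_bigr => i _.
  by rewrite /P_ ffunE /fprod_of_dffun fprodE.
rewrite big_fprod.
transitivity (\prod_i \sum_(j in tagged_with T_ i) untag 0 (P_ i) j); last first.
  apply: eq_bigr => i _.
  rewrite [RHS](eq_bigr (fun x => P_ i x)); last by move=> x _; rewrite ffunE.
  by rewrite (big_tag (fun i x => P_ i x)).
rewrite (bigA_distr_big_dep (tagged_with T_) (fun i j => untag 0 (P_ i) j)).
by [].
Qed.

Lemma sum_X (I : finType) (H : I -> finZmodType) (le : rel I) (hle : is_poset le)
  (alpha : forall i, H i -> algC) (halpha : forall i, is_char (alpha i)) :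
  let S := char_supp alpha in
  \sum_(b : prodH H | down_closure le (supp b) == Xset le S) char_eval alpha b =
    (-1) ^+ #|minP le (Dset le S)|
    * (\prod_(i in Xset le S :\: maxP le (Xset le S)) (#|H i|)%:R)
    * (\prod_(i in maxP le (Xset le S) :\: minP le (Dset le S)) ((#|H i|)%:R - 1)).
Proof.
move=> S.
set X := Xset le S; set M := maxP le X; set mD := minP le (Dset le S).
pose cond i (y : H i) : bool := if i \in M then y != 0 else if i \in X then true else y == 0.
pose F i : algC := if i \in M then (if i \in S then -1 else (#|H i|)%:R - 1)
                   else if i \in X then (#|H i|)%:R else 1.
transitivity (\sum_(b : prodH H) \prod_i (if cond i (b i) then alpha i (b i) else 0)).
  rewrite big_mkcond; apply: eq_bigr => b _.
  rewrite (dcX_iff hle S b) -/X -/M.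
  case: forallP => [hc|hn].
    by rewrite /char_eval; apply: eq_bigr => i _; rewrite /cond hc.
  have /existsP [i ni] : [exists i, ~~ cond i (b i)].
    by rewrite -negb_forall; apply/negP => /forallP.
  by rewrite (bigD1 i) //= (negbTE ni) mul0r.
rewrite (sum_prod_dffun (fun i y => if cond i y then alpha i y else 0)).
transitivity (\prod_i F i).
  apply: eq_bigr => i _; rewrite /cond /F.
  have cs := char_sum (halpha i).
  case: ifP => iM.
    rewrite -big_mkcond /=.
    have e : \sum_y alpha i y = alpha i 0 + \sum_(y | y != 0) alpha i y.
      by rewrite (bigD1 0).
    rewrite cs (halpha i).1 in e.
    rewrite -(addKr 1 (\sum_(y | y != 0) alpha i y)) -e.
    by rewrite /S inE; case: ifP => _; rewrite ?addr0 // addrC.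
  case: ifP => iX.
    rewrite cs; case: existsP => // -[x hx].
    have iS : i \in S by rewrite inE; apply/existsP; exists x.
    by have := SX_minD hle iS iX; move/(subsetP (minD_maxX hle S)); rewrite -/M iM.
  rewrite -big_mkcond /= (big_pred1 0) ?(halpha i).1 //.
rewrite -prodr_const (big_mkcond (fun i => i \in mD)) (big_mkcond (fun i => i \in X :\: M)).
rewrite (big_mkcond (fun i => i \in M :\: mD)) -!big_split /=.
apply: eq_bigr => i _; rewrite /F !in_setD.
have mDM := subsetP (minD_maxX hle S); have mDS := subsetP (minD_S hle S).
rewrite -/X -/M -/mD in mDM mDS *.
case iM: (i \in M).
  have iX : i \in X by apply: maxP_sub iM.
  case iS: (i \in S).
    by rewrite (SX_minD hle iS iX) /= !mulr1.
  have imD : (i \in mD) = false by apply/negP => /mDS; rewrite iS.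
  by rewrite imD /= !mul1r.
have imD : (i \in mD) = false by apply/negP => /mDM; rewrite iM.
by rewrite imD /=; case: (i \in X); rewrite /= ?mul1r ?mulr1.
Qed.

Unset Implicit Arguments. Set Strict Implicit.

Theorem proposition2p2 (I : finType) (H : I -> finZmodType)
  (hH : forall i, (1 < #|H i|)%N)
  (le : rel I) (hle : is_poset le)
  (alpha : forall i, H i -> algC) (halpha : forall i, is_char (alpha i)) :
  let D := down_closure (dual_rel le) (char_supp alpha) in
  let X := (~: D) :|: minP le D in
  (size (Fpoly le alpha)).-1 = #|X| /\
  #|X| = (#|I| - #|D| + #|minP le D|)%N /\
  lead_coef (Fpoly le alpha) =
    (-1) ^+ #|minP le D|
    * (\prod_(i in X :\: maxP le X) (#|H i|)%:R)
    * (\prod_(i in maxP le X :\: minP le D) ((#|H i|)%:R - 1)).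
Proof.
move=> D X.
set S := char_supp alpha.
pose c k := \sum_(b : prodH H | wtP le b == k) char_eval alpha b.
pose g (J : {set I}) := \sum_(b : prodH H | down_closure le (supp b) == J) char_eval alpha b.
have coefF k : (Fpoly le alpha)`_k = c k.
  rewrite /Fpoly coef_sum.
  under eq_bigr do rewrite coefZ coefXn.
  case: (ltnP k #|I|.+1) => hk.
    rewrite (bigD1 (Ordinal hk)) //= eqxx mulr1 [X in _ + X]big1 ?addr0 // => l nl.
    suff -> : (k == l) = false by rewrite mulr0.
    apply/negbTE; apply: contra nl => /eqP e; apply/eqP/val_inj; by rewrite /= e.
  rewrite big1; last first.
    move=> l _; suff -> : (k == l) = false by rewrite mulr0.
    by apply/negbTE; rewrite neq_ltn (leq_trans (ltn_ord l) hk) orbT.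
  rewrite /c big_pred0 // => b; apply/negbTE; rewrite neq_ltn; apply/orP; left.
  by apply: leq_trans hk; rewrite ltnS /wtP max_card.
have cdec k : c k = \sum_(J : {set I} | #|J| == k) g J.
  rewrite /c (partition_big (fun b => down_closure le (supp b)) (fun J : {set I} => #|J| == k)) //.
  apply: eq_bigr => J /eqP hJ; apply: eq_bigl => b.
  case: (eqVneq (down_closure le (supp b)) J) => e; rewrite ?andbF ?andbT //.
  by rewrite /wtP e hJ eqxx.
have alt J : g J = 0 \/ J \subset X.
  case: (boolP [exists s in S, exists t in J, le s t && (s != t)]).
    move=> /existsP [s /andP [sS /existsP [t /andP [tJ /andP [lst nst]]]]].
    by left; apply: (sum_vanish hle halpha sS tJ lst nst).
  move=> hn; right; apply: (subX hle) => s t sS tJ lst.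
  apply/eqP; apply/negPn/negP => nst; move/negP: hn; apply.
  by apply/existsP; exists s; rewrite sS; apply/existsP; exists t; rewrite tJ lst.
have c0 k : (#|X| < k)%N -> c k = 0.
  move=> hk; rewrite cdec big1 // => J /eqP hJ.
  case: (alt J) => // sub; have := subset_leq_card sub; rewrite hJ => hk'.
  by move: (leq_trans hk hk'); rewrite ltnn.
have cX : c #|X| = g X.
  rewrite cdec (bigD1 X) //= big1 ?addr0 // => J /andP [/eqP hJ nJX].
  case: (alt J) => // sub; move: nJX.
  by rewrite eqEcard sub hJ leqnn.
have gX := sum_X hle halpha.
rewrite /= -/S -/D -/X in gX.
set R := (-1) ^+ _ * _ * _ in gX *.
have Rnz : R != 0.
  rewrite /R !mulf_neq0 //.
  - by rewrite expf_neq0 // oppr_eq0 oner_eq0.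
  - apply/prodf_neq0 => i _; rewrite pnatr_eq0 -lt0n; exact: ltnW (hH i).
  - apply/prodf_neq0 => i _; rewrite subr_eq0 pnatr_eq1 neq_ltn (hH i) orbT //.
have nz : (Fpoly le alpha)`_#|X| != 0 by rewrite coefF cX /g gX.
have hsize : size (Fpoly le alpha) = #|X|.+1.
  apply/eqP; rewrite eqn_leq; apply/andP; split.
    by apply/leq_sizeP => j hj; rewrite coefF c0.
  rewrite ltnNge; apply/negP => /leq_sizeP h; move/eqP: nz; apply; exact: h _ (leqnn _).
split; first by rewrite hsize.
split.
  rewrite /X cardsU.
  have -> : ~: D :&: minP le D = set0.
    apply/setP => i; rewrite !inE; apply/negP => /andP [/negP a /andP [b _]]; exact: a b.
  rewrite cards0 subn0 -(cardsC D) addKn //.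
by rewrite lead_coefE hsize /= coefF cX /g gX.
Qed.
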